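(* For all integers $n\geq 3$, $s_2(n)<1$, where $s_2(n)=g(n-1)+g(n+1)-f(n-1)f(n+1)$.
   Context: For integers $m\geq 2$, with $x=\pi\sqrt{m-1}$, $y=\pi\sqrt{m}$, $z=\pi\sqrt{m+1}$, define \[ f(m)=e^{x-2y+z}\frac{(x^6-x^5-1)\,y^{16}\,(z^6-z^5-1)}{x^8(y^6-y^5+1)^2z^8},\qquad g(m)=e^{x-2y+z}\frac{(x^6-x^5+1)\,y^{16}\,(z^6-z^5+1)}{x^8(y^6-y^5-1)^2z^8}. \] *)

(* Defs.v *)
From Stdlib Require Import Reals.
Open Scope R_scope.

Definition xm (m : nat) : R := PI * sqrt (INR m - 1).
Definition ym (m : nat) : R := PI * sqrt (INR m).
Definition zm (m : nat) : R := PI * sqrt (INR m + 1).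

Definition f (m : nat) : R :=
  let x := xm m in let y := ym m in let z := zm m in
  exp (x - 2 * y + z) *
  ((x ^ 6 - x ^ 5 - 1) * y ^ 16 * (z ^ 6 - z ^ 5 - 1)) /
  (x ^ 8 * (y ^ 6 - y ^ 5 + 1) ^ 2 * z ^ 8).

Definition g (m : nat) : R :=
  let x := xm m in let y := ym m in let z := zm m in
  exp (x - 2 * y + z) *
  ((x ^ 6 - x ^ 5 + 1) * y ^ 16 * (z ^ 6 - z ^ 5 + 1)) /
  (x ^ 8 * (y ^ 6 - y ^ 5 - 1) ^ 2 * z ^ 8).

Definition s2 (n : nat) : R := g (n - 1) + g (n + 1) - f (n - 1) * f (n + 1).

(* Main.v *)
Require Import Defs.
From Stdlib Require Import Reals.
From Stdlib Require Import Lra Lia Psatz Factorial.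
Open Scope R_scope.


Definition Pp (u:R) := 1 - u - u^6.
Definition Qq (u:R) := 1 - u + u^6.

Lemma decomp_f (E x y z : R) : 2 <= x -> 2 <= y -> 2 <= z ->
  E * ((x^6 - x^5 - 1) * y^16 * (z^6 - z^5 - 1)) / (x^8 * (y^6 - y^5 + 1)^2 * z^8)
  = E * (y^4/(x^2*z^2)) * Pp (/x) * Pp (/z) / (Qq (/y))^2.
Proof.
  intros Hx Hy Hz.
  assert (Hy6 : y^6 - y^5 + 1 > 0).
  { assert (y^5 >= 2) by (assert (y^5 >= 2^5) by (apply Rle_ge, pow_incr; lra); simpl in *; lra). nra. }
  assert (HQ : Qq (/y) = (y^6 - y^5 + 1) / y^6).
  { unfold Qq. field. lra. }
  rewrite HQ. unfold Pp. field. repeat split; try lra.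

Qed.

Lemma decomp_g (E x y z : R) : 2 <= x -> 2 <= y -> 2 <= z ->
  E * ((x^6 - x^5 + 1) * y^16 * (z^6 - z^5 + 1)) / (x^8 * (y^6 - y^5 - 1)^2 * z^8)
  = E * (y^4/(x^2*z^2)) * Qq (/x) * Qq (/z) / (Pp (/y))^2.
Proof.
  intros Hx Hy Hz.
  assert (Hy6 : y^6 - y^5 - 1 > 0).
  { assert (y^5 >= 2) by (assert (y^5 >= 2^5) by (apply Rle_ge, pow_incr; lra); simpl in *; lra). nra. }
  assert (HP : Pp (/y) = (y^6 - y^5 - 1) / y^6).
  { unfold Pp. field. lra. }
  rewrite HP. unfold Qq. field. repeat split; try lra.

Qed.

Lemma PI_bounds : 3141592653/1000000000 < PI < 3141592654/1000000000.
Proof.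
  destruct (PI_2_3_7_ineq 6) as [H1 H2].
  unfold PI_2_3_7_tg, tg_alt, Ratan_seq in H1, H2.
  simpl in H1, H2. lra.
Qed.

Definition dl m := xm m - 2 * ym m + zm m.
Definition ux m := / xm m.
Definition uy m := / ym m.
Definition uz m := / zm m.
Definition AA m := ym m ^4 / (xm m ^2 * zm m ^2).
Definition Kf m := Qq (ux m) * Qq (uz m) * Qq (uy m)^2 / (Pp (ux m) * Pp (uz m) * Pp (uy m)^2).

Lemma INR_ge2 m : (2 <= m)%nat -> 2 <= INR m.
Proof. intro H. apply le_INR in H. simpl in H. lra. Qed.

Lemma sq_ge1 v : 1 <= v -> 1 <= sqrt v.
Proof. intro H. rewrite <- sqrt_1. apply sqrt_le_1_alt. lra. Qed.

Lemma xyz_ge3 m : (2 <= m)%nat -> 3 <= xm m /\ 3 <= ym m /\ 3 <= zm m.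
Proof.
  intro H. pose proof (INR_ge2 m H). pose proof PI_bounds.
  unfold xm, ym, zm.
  pose proof (sq_ge1 (INR m - 1) ltac:(lra)).
  pose proof (sq_ge1 (INR m) ltac:(lra)).
  pose proof (sq_ge1 (INR m + 1) ltac:(lra)).
  repeat split; nra.
Qed.

Lemma f_eq m : (2 <= m)%nat ->
  Defs.f m = exp (dl m) * AA m * Pp (ux m) * Pp (uz m) / Qq (uy m) ^ 2.
Proof.
  intro H. destruct (xyz_ge3 m H) as [H1 [H2 H3]].
  unfold Defs.f. cbv zeta. rewrite decomp_f by lra. reflexivity.
Qed.

Lemma g_eq0 m : (2 <= m)%nat ->
  Defs.g m = exp (dl m) * AA m * Qq (ux m) * Qq (uz m) / Pp (uy m) ^ 2.
Proof.
  intro H. destruct (xyz_ge3 m H) as [H1 [H2 H3]].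
  unfold Defs.g. cbv zeta. rewrite decomp_g by lra. reflexivity.
Qed.

Lemma u_range m : (2 <= m)%nat ->
  0 < ux m <= 1/3 /\ 0 < uy m <= 1/3 /\ 0 < uz m <= 1/3.
Proof.
  intro H. destruct (xyz_ge3 m H) as [H1 [H2 H3]]. unfold ux, uy, uz.
  assert (forall v, 3 <= v -> 0 < / v <= 1/3).
  { intros v Hv. split. apply Rinv_0_lt_compat; lra.
    replace (1/3) with (/3) by field. apply Rinv_le_contravar; lra. }
  auto.
Qed.

Lemma u6_le u : 0 < u <= 1/3 -> 0 < u^6 <= 1/729.
Proof.
  intro H. split. apply pow_lt; lra.
  replace (1/729) with ((1/3)^6) by field. apply pow_incr; lra.
Qed.

Lemma PQ_pos u : 0 < u <= 1/3 -> 0 < Pp u /\ 0 < Qq u /\ Pp u <= Qq u.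
Proof. intro H. pose proof (u6_le u H). unfold Pp, Qq. lra. Qed.

Lemma AA_eq m : (2 <= m)%nat -> AA m = INR m ^ 2 / ((INR m - 1) * (INR m + 1)).
Proof.
  intro H. pose proof (INR_ge2 m H). pose proof PI_bounds.
  unfold AA, xm, ym, zm.
  rewrite !Rpow_mult_distr.
  replace (sqrt (INR m) ^ 4) with ((sqrt (INR m) ^ 2)^2) by ring.
  rewrite !pow2_sqrt by lra. field. repeat split; lra.
Qed.

Lemma AA_pos m : (2 <= m)%nat -> 0 < AA m.
Proof.
  intro H. pose proof (INR_ge2 m H). rewrite AA_eq by auto.
  apply Rdiv_lt_0_compat; [apply pow_lt; lra | apply Rmult_lt_0_compat; lra].
Qed.

Lemma f_pos m : (2 <= m)%nat -> 0 < Defs.f m.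
Proof.
  intro H. rewrite f_eq by auto. destruct (u_range m H) as [H1 [H2 H3]].
  destruct (PQ_pos _ H1) as [? [? ?]]. destruct (PQ_pos _ H2) as [? [? ?]].
  destruct (PQ_pos _ H3) as [? [? ?]].
  pose proof (exp_pos (dl m)). pose proof (AA_pos m H).
  apply Rdiv_lt_0_compat; [|apply pow_lt; lra].
  apply Rmult_lt_0_compat; [apply Rmult_lt_0_compat; [apply Rmult_lt_0_compat|]|]; lra.
Qed.

Lemma g_eq m : (2 <= m)%nat -> Defs.g m = Defs.f m * Kf m.
Proof.
  intro H. rewrite g_eq0, f_eq by auto. unfold Kf.
  destruct (u_range m H) as [H1 [H2 H3]].
  destruct (PQ_pos _ H1) as [? [? ?]]. destruct (PQ_pos _ H2) as [? [? ?]].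
  destruct (PQ_pos _ H3) as [? [? ?]].
  field. repeat split; lra.
Qed.

Lemma Kf_ge1 m : (2 <= m)%nat -> 1 <= Kf m.
Proof.
  intro H. unfold Kf.
  destruct (u_range m H) as [H1 [H2 H3]].
  destruct (PQ_pos _ H1) as [? [? ?]]. destruct (PQ_pos _ H2) as [? [? ?]].
  destruct (PQ_pos _ H3) as [? [? ?]].
  set (B := Pp (ux m) * Pp (uz m) * Pp (uy m) ^ 2).
  set (A := Qq (ux m) * Qq (uz m) * Qq (uy m) ^ 2).
  assert (0 < B) by (apply Rmult_lt_0_compat; [nra| apply pow_lt; lra]).
  assert (B <= A).
  { unfold A, B. apply Rmult_le_compat.
    - apply Rmult_le_pos; lra.
    - apply pow_le; lra.
    - apply Rmult_le_compat; lra.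
    - apply pow_incr; lra. }
  assert (A / B - 1 = (A - B) / B) by (field; lra).
  assert (0 <= (A - B) / B) by (unfold Rdiv; apply Rmult_le_pos; [lra | left; apply Rinv_0_lt_compat; lra]).
  lra.
Qed.

Lemma combine f1 f2 k1 k2 F1 F2 K1 K2 :
  0 <= f1 <= F1 -> F1 <= 1 -> 0 <= f2 <= F2 -> F2 <= 1 ->
  1 <= k1 <= K1 -> 1 <= k2 <= K2 ->
  F1 * (K1 - 1) + F2 * (K2 - 1) < (1 - F1) * (1 - F2) ->
  f1 * k1 + f2 * k2 - f1 * f2 < 1.
Proof.
  intros. assert ((1-F1)*(1-F2) <= (1-f1)*(1-f2)) by (apply Rmult_le_compat; lra).
  assert (f1 * (k1 - 1) <= F1 * (K1 - 1)) by (apply Rmult_le_compat; lra).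
  assert (f2 * (k2 - 1) <= F2 * (K2 - 1)) by (apply Rmult_le_compat; lra).
  nra.
Qed.

Lemma exp_lb6 : forall t, 0 <= t ->
  1 + t + t^2/2 + t^3/6 + t^4/24 + t^5/120 + t^6/720 <= exp t.
Proof.
  assert (E1_le_exp : forall t N, 0 <= t -> E1 t N <= exp t).
  { intros t N Ht. apply growing_ineq; [|apply E1_cvg].
    intro n. unfold E1. rewrite tech5.
    assert (0 <= / INR (fact (S n)) * t ^ S n).
    { apply Rmult_le_pos. left; apply Rinv_0_lt_compat, lt_0_INR, lt_O_fact. apply pow_le; auto. }
    lra. }
  intros t Ht. eapply Rle_trans; [|apply (E1_le_exp t 6%nat Ht)].
  unfold E1. simpl. lra.
Qed.

Lemma sqrt_bnd k al ah : 0 <= al -> 0 <= ah -> al^2 <= k <= ah^2 -> al <= sqrt k <= ah.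
Proof.
  intros H1 H2 [H3 H4]. split.
  - rewrite <- (sqrt_pow2 al H1). apply sqrt_le_1_alt. auto.
  - rewrite <- (sqrt_pow2 ah H2). apply sqrt_le_1_alt. auto.
Qed.

Lemma u_bnd k l h al ah : 0 < al -> 0 <= ah -> al^2 <= k <= ah^2 -> 0 <= l -> 0 <= h ->
   l * (3141592654/1000000000 * ah) <= 1 -> 1 <= h * (3141592653/1000000000 * al) ->
   l <= /(PI * sqrt k) <= h.
Proof.
  intros. pose proof PI_bounds. destruct (sqrt_bnd k al ah) as [Ha Hb]; try lra.
  set (v := PI * sqrt k).
  assert (3141592653/1000000000 * al <= v) by (unfold v; apply Rmult_le_compat; lra).
  assert (v <= 3141592654/1000000000 * ah) by (unfold v; apply Rmult_le_compat; lra).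
  assert (0 < v) by lra.
  split.
  - apply (Rmult_le_reg_r v); auto. rewrite Rinv_l by lra. nra.
  - apply (Rmult_le_reg_r v); auto. rewrite Rinv_l by lra. nra.
Qed.

Lemma dl_bnd m T al ah bl bh cl ch : (2 <= m)%nat ->
  0 <= al -> 0 <= ah -> al^2 <= INR m - 1 <= ah^2 ->
  0 <= bl -> 0 <= bh -> bl^2 <= INR m <= bh^2 ->
  0 <= cl -> 0 <= ch -> cl^2 <= INR m + 1 <= ch^2 ->
  0 <= 2*bl - ah - ch -> T <= 3141592653/1000000000 * (2*bl - ah - ch) ->
  T <= - dl m.
Proof.
  intros Hm; intros. pose proof PI_bounds. pose proof (INR_ge2 m Hm).
  destruct (sqrt_bnd (INR m - 1) al ah) as [? ?]; auto.
  destruct (sqrt_bnd (INR m) bl bh) as [? ?]; auto.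
  destruct (sqrt_bnd (INR m + 1) cl ch) as [? ?]; auto.
  unfold dl, xm, ym, zm.
  assert (2 * bl - ah - ch <= 2 * sqrt (INR m) - sqrt (INR m - 1) - sqrt (INR m + 1)) by lra.
  nra.
Qed.

Lemma ratio_mono u H : 0 < u <= H -> H <= 1/3 -> Qq u / Pp u <= Qq H / Pp H.
Proof.
  intros. destruct (PQ_pos u ltac:(lra)) as [? [? ?]].
  destruct (PQ_pos H ltac:(lra)) as [? [? ?]].
  assert (u^6 <= H^6) by (apply pow_incr; lra).
  assert (0 <= u^6) by (apply pow_le; lra).
  assert (Qq u * Pp H <= Qq H * Pp u) by (unfold Pp, Qq in *; nra).
  apply (Rmult_le_reg_r (Pp u * Pp H)). nra.
  replace (Qq u / Pp u * (Pp u * Pp H)) with (Qq u * Pp H) by (field; lra).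
  replace (Qq H / Pp H * (Pp u * Pp H)) with (Qq H * Pp u) by (field; lra).
  auto.
Qed.

Lemma ratio_ge1 u : 0 < u <= 1/3 -> 1 <= Qq u / Pp u.
Proof.
  intros. destruct (PQ_pos u H) as [? [? ?]].
  apply (Rmult_le_reg_r (Pp u)); auto. field_simplify; lra.
Qed.

Lemma Kf_split m : (2 <= m)%nat ->
  Kf m = (Qq (ux m) / Pp (ux m)) * (Qq (uz m) / Pp (uz m)) * (Qq (uy m) / Pp (uy m))^2.
Proof.
  intro H. destruct (u_range m H) as [H1 [H2 H3]].
  destruct (PQ_pos _ H1) as [? [? ?]]. destruct (PQ_pos _ H2) as [? [? ?]].
  destruct (PQ_pos _ H3) as [? [? ?]].
  unfold Kf. field. repeat split; lra.
Qed.

Lemma Kf_le m hx hy hz Kb : (2 <= m)%nat ->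
  ux m <= hx -> uy m <= hy -> uz m <= hz -> hx <= 1/3 -> hy <= 1/3 -> hz <= 1/3 ->
  (Qq hx / Pp hx) * (Qq hz / Pp hz) * (Qq hy / Pp hy)^2 <= Kb ->
  Kf m <= Kb.
Proof.
  intros H Hx Hy Hz Hx3 Hy3 Hz3 HK. rewrite Kf_split by auto.
  destruct (u_range m H) as [H1 [H2 H3]].
  pose proof (ratio_ge1 _ H1). pose proof (ratio_ge1 _ H2). pose proof (ratio_ge1 _ H3).
  pose proof (ratio_mono (ux m) hx ltac:(lra) Hx3).
  pose proof (ratio_mono (uy m) hy ltac:(lra) Hy3).
  pose proof (ratio_mono (uz m) hz ltac:(lra) Hz3).
  eapply Rle_trans; [|exact HK].
  apply Rmult_le_compat.
  - apply Rmult_le_pos; lra.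
  - apply pow_le; lra.
  - apply Rmult_le_compat; lra.
  - apply pow_incr; lra.
Qed.

Lemma f_le m lx lz ly hy T Eb Fb : (2 <= m)%nat ->
  0 < lx -> lx <= ux m -> 0 < lz -> lz <= uz m -> 0 < ly -> ly <= uy m <= hy -> hy <= 1/3 ->
  0 <= T -> T <= - dl m -> 1 <= Eb * (1 + T + T^2/2 + T^3/6 + T^4/24 + T^5/120 + T^6/720) ->
  INR m ^ 2 / ((INR m - 1) * (INR m + 1)) * Eb * (1 - lx - lx^6) * (1 - lz - lz^6)
    <= Fb * (1 - hy + ly^6)^2 ->
  Defs.f m <= Fb.
Proof.
  intros Hm Hlx Hx Hlz Hz Hly Hy Hy3 HT HTd HE HF.
  rewrite f_eq by auto. rewrite <- AA_eq in HF by auto.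
  destruct (u_range m Hm) as [H1 [H2 H3]].
  destruct (PQ_pos _ H1) as [? [? ?]]. destruct (PQ_pos _ H2) as [? [? ?]].
  destruct (PQ_pos _ H3) as [? [? ?]].
  pose proof (AA_pos m Hm).
  assert (HeE : exp (dl m) <= Eb).
  { pose proof (exp_lb6 T HT).
    assert (Hm2 : exp (dl m) <= exp (- T)).
    { assert (hh : dl m <= - T) by lra. destruct (Rle_lt_or_eq_dec _ _ hh) as [h|h].
      left; apply exp_increasing; lra. right; rewrite h; reflexivity. }
    rewrite exp_Ropp in Hm2. pose proof (exp_pos T).
    assert (/ exp T <= Eb).
    { apply (Rmult_le_reg_r (exp T)); auto. rewrite Rinv_l by lra.
      set (S := 1 + T + T^2/2 + T^3/6 + T^4/24 + T^5/120 + T^6/720) in *.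
      assert (0 < S) by (unfold S; pose proof (pow_le T 2); pose proof (pow_le T 3); pose proof (pow_le T 4); pose proof (pow_le T 5); pose proof (pow_le T 6); lra).
      assert (0 < Eb) by nra.
      assert (Eb * S <= Eb * exp T) by (apply Rmult_le_compat_l; lra). lra. }
    lra. }
  assert (HPx : Pp (ux m) <= 1 - lx - lx^6).
  { unfold Pp. assert (lx^6 <= ux m ^6) by (apply pow_incr; lra). lra. }
  assert (HPz : Pp (uz m) <= 1 - lz - lz^6).
  { unfold Pp. assert (lz^6 <= uz m ^6) by (apply pow_incr; lra). lra. }
  assert (HQy : 1 - hy + ly^6 <= Qq (uy m)).
  { unfold Qq. assert (ly^6 <= uy m ^6) by (apply pow_incr; lra). lra. }
  assert (0 < 1 - hy + ly^6) by (pose proof (pow_le ly 6); lra).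
  pose proof (exp_pos (dl m)).
  assert (Hn : exp (dl m) * AA m * Pp (ux m) * Pp (uz m) <= AA m * Eb * (1 - lx - lx ^ 6) * (1 - lz - lz ^ 6)).
  { replace (AA m * Eb * (1 - lx - lx ^ 6) * (1 - lz - lz ^ 6)) with (Eb * AA m * (1 - lx - lx ^ 6) * (1 - lz - lz ^ 6)) by ring.
    apply Rmult_le_compat; try lra.
    - apply Rmult_le_pos; [apply Rmult_le_pos|]; lra.
    - apply Rmult_le_compat; try lra. apply Rmult_le_pos; lra.
      apply Rmult_le_compat; lra. }
  assert (Hd : (1 - hy + ly^6)^2 <= Qq (uy m)^2) by (apply pow_incr; lra).
  assert (0 < (1 - hy + ly^6)^2) by (apply pow_lt; lra).
  apply (Rmult_le_reg_r (Qq (uy m) ^ 2)). apply pow_lt; lra.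
  unfold Rdiv. rewrite Rmult_assoc, Rinv_l, Rmult_1_r by (apply pow_nonzero; lra).
  eapply Rle_trans; [exact Hn|]. eapply Rle_trans; [exact HF|].
  apply Rmult_le_compat_l; [|exact Hd].
  (* Fb >= 0 *)
  assert (0 <= AA m * Eb * (1 - lx - lx ^ 6) * (1 - lz - lz ^ 6)).
  { assert (0 <= Eb) by (pose proof (pow_le T 2); pose proof (pow_le T 3); pose proof (pow_le T 4); pose proof (pow_le T 5); pose proof (pow_le T 6); nra).
    apply Rmult_le_pos; [apply Rmult_le_pos; [apply Rmult_le_pos|]|]; lra. }
  nra.
Qed.

Lemma fK_2 : Defs.f 2 <= (227739/250000) /\ Kf 2 <= (5019123/5000000).
Proof.
  assert (Hm : (2 <= 2)%nat) by lia.
  assert (HI : INR 2 = 2) by (simpl; lra).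
  assert (Hx : (63661977/200000000) <= ux 2 <= (318309887/1000000000)).
  { unfold ux, xm. apply u_bnd with (al := (1/1)) (ah := (1000000001/1000000000)); first [lia | rewrite ?HI; lra]. }
  assert (Hy : (112539539/500000000) <= uy 2 <= (5626977/25000000)).
  { unfold uy, ym. apply u_bnd with (al := (707106781/500000000)) (ah := (1414213563/1000000000)); first [lia | rewrite ?HI; lra]. }
  assert (Hz : (91888149/500000000) <= uz 2 <= (183776299/1000000000)).
  { unfold uz, zm. apply u_bnd with (al := (1732050807/1000000000)) (ah := (216506351/125000000)); first [lia | rewrite ?HI; lra]. }
  assert (HT : (302775123/1000000000) <= - dl 2).
  { apply dl_bnd with (al := (1/1)) (ah := (1000000001/1000000000)) (bl := (707106781/500000000)) (bh := (1414213563/1000000000)) (cl := (1732050807/1000000000)) (ch := (216506351/125000000)); first [lia | rewrite ?HI; lra]. }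
  split.
  - apply f_le with (lx := (63661977/200000000)) (lz := (91888149/500000000)) (ly := (112539539/500000000)) (hy := (5626977/25000000)) (T := (302775123/1000000000)) (Eb := (184691309/250000000)); first [lia | rewrite ?HI; lra].
  - apply Kf_le with (hx := (318309887/1000000000)) (hy := (5626977/25000000)) (hz := (183776299/1000000000)); first [lia | unfold Qq, Pp; lra].
Qed.

Lemma fK_3 : Defs.f 3 <= (188083/200000) /\ Kf 3 <= (78169/78125).
Proof.
  assert (Hm : (2 <= 3)%nat) by lia.
  assert (HI : INR 3 = 3) by (simpl; lra).
  assert (Hx : (112539539/500000000) <= ux 3 <= (5626977/25000000)).
  { unfold ux, xm. apply u_bnd with (al := (707106781/500000000)) (ah := (1414213563/1000000000)); first [lia | rewrite ?HI; lra]. }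
  assert (Hy : (91888149/500000000) <= uy 3 <= (183776299/1000000000)).
  { unfold uy, ym. apply u_bnd with (al := (1732050807/1000000000)) (ah := (216506351/125000000)); first [lia | rewrite ?HI; lra]. }
  assert (Hz : (79577471/500000000) <= uz 3 <= (621699/3906250)).
  { unfold uz, zm. apply u_bnd with (al := (2/1)) (ah := (2000000001/1000000000)); first [lia | rewrite ?HI; lra]. }
  assert (HT : (156727931/1000000000) <= - dl 3).
  { apply dl_bnd with (al := (707106781/500000000)) (ah := (1414213563/1000000000)) (bl := (1732050807/1000000000)) (bh := (216506351/125000000)) (cl := (2/1)) (ch := (2000000001/1000000000)); first [lia | rewrite ?HI; lra]. }
  split.
  - apply f_le with (lx := (112539539/500000000)) (lz := (79577471/500000000)) (ly := (91888149/500000000)) (hy := (183776299/1000000000)) (T := (156727931/1000000000)) (Eb := (85493663/100000000)); first [lia | rewrite ?HI; lra].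
  - apply Kf_le with (hx := (5626977/25000000)) (hy := (183776299/1000000000)) (hz := (621699/3906250)); first [lia | unfold Qq, Pp; lra].
Qed.

Lemma fK_4 : Defs.f 4 <= (955379/1000000) /\ Kf 4 <= (1250239/1250000).
Proof.
  assert (Hm : (2 <= 4)%nat) by lia.
  assert (HI : INR 4 = 4) by (simpl; lra).
  assert (Hx : (91888149/500000000) <= ux 4 <= (183776299/1000000000)).
  { unfold ux, xm. apply u_bnd with (al := (1732050807/1000000000)) (ah := (216506351/125000000)); first [lia | rewrite ?HI; lra]. }
  assert (Hy : (79577471/500000000) <= uy 4 <= (621699/3906250)).
  { unfold uy, ym. apply u_bnd with (al := (2/1)) (ah := (2000000001/1000000000)); first [lia | rewrite ?HI; lra]. }
  assert (Hz : (35588127/250000000) <= uz 4 <= (142352509/1000000000)).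
  { unfold uz, zm. apply u_bnd with (al := (2236067977/1000000000)) (ah := (1118033989/500000000)); first [lia | rewrite ?HI; lra]. }
  assert (HT : (100157787/1000000000) <= - dl 4).
  { apply dl_bnd with (al := (1732050807/1000000000)) (ah := (216506351/125000000)) (bl := (2/1)) (bh := (2000000001/1000000000)) (cl := (2236067977/1000000000)) (ch := (1118033989/500000000)); first [lia | rewrite ?HI; lra]. }
  split.
  - apply f_le with (lx := (91888149/500000000)) (lz := (35588127/250000000)) (ly := (79577471/500000000)) (hy := (621699/3906250)) (T := (100157787/1000000000)) (Eb := (452347329/500000000)); first [lia | rewrite ?HI; lra].
  - apply Kf_le with (hx := (183776299/1000000000)) (hy := (621699/3906250)) (hz := (142352509/1000000000)); first [lia | unfold Qq, Pp; lra].
Qed.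

Lemma fK_5 : Defs.f 5 <= (482419/500000) /\ Kf 5 <= (5000443/5000000).
Proof.
  assert (Hm : (2 <= 5)%nat) by lia.
  assert (HI : INR 5 = 5) by (simpl; lra).
  assert (Hx : (79577471/500000000) <= ux 5 <= (621699/3906250)).
  { unfold ux, xm. apply u_bnd with (al := (2/1)) (ah := (2000000001/1000000000)); first [lia | rewrite ?HI; lra]. }
  assert (Hy : (35588127/250000000) <= uy 5 <= (142352509/1000000000)).
  { unfold uy, ym. apply u_bnd with (al := (2236067977/1000000000)) (ah := (1118033989/500000000)); first [lia | rewrite ?HI; lra]. }
  assert (Hz : (64974733/500000000) <= uz 5 <= (129949467/1000000000)).
  { unfold uz, zm. apply u_bnd with (al := (1224744871/500000000)) (ah := (2449489743/1000000000)); first [lia | rewrite ?HI; lra]. }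
  assert (HT : (35572583/500000000) <= - dl 5).
  { apply dl_bnd with (al := (2/1)) (ah := (2000000001/1000000000)) (bl := (2236067977/1000000000)) (bh := (1118033989/500000000)) (cl := (1224744871/500000000)) (ch := (2449489743/1000000000)); first [lia | rewrite ?HI; lra]. }
  split.
  - apply f_le with (lx := (79577471/500000000)) (lz := (64974733/500000000)) (ly := (35588127/250000000)) (hy := (142352509/1000000000)) (T := (35572583/500000000)) (Eb := (465663343/500000000)); first [lia | rewrite ?HI; lra].
  - apply Kf_le with (hx := (621699/3906250)) (hy := (142352509/1000000000)) (hz := (129949467/1000000000)); first [lia | unfold Qq, Pp; lra].
Qed.

Lemma fK_6 : Defs.f 6 <= (971317/1000000) /\ Kf 6 <= (2000097/2000000).
Proof.
  assert (Hm : (2 <= 6)%nat) by lia.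
  assert (HI : INR 6 = 6) by (simpl; lra).
  assert (Hx : (35588127/250000000) <= ux 6 <= (142352509/1000000000)).
  { unfold ux, xm. apply u_bnd with (al := (2236067977/1000000000)) (ah := (1118033989/500000000)); first [lia | rewrite ?HI; lra]. }
  assert (Hy : (64974733/500000000) <= uy 6 <= (129949467/1000000000)).
  { unfold uy, ym. apply u_bnd with (al := (1224744871/500000000)) (ah := (2449489743/1000000000)); first [lia | rewrite ?HI; lra]. }
  assert (Hz : (30077457/250000000) <= uz 6 <= (120309829/1000000000)).
  { unfold uz, zm. apply u_bnd with (al := (2645751311/1000000000)) (ah := (165359457/62500000)); first [lia | rewrite ?HI; lra]. }
  assert (HT : (53910339/1000000000) <= - dl 6).
  { apply dl_bnd with (al := (2236067977/1000000000)) (ah := (1118033989/500000000)) (bl := (1224744871/500000000)) (bh := (2449489743/1000000000)) (cl := (2645751311/1000000000)) (ch := (165359457/62500000)); first [lia | rewrite ?HI; lra]. }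
  split.
  - apply f_le with (lx := (35588127/250000000)) (lz := (30077457/250000000)) (ly := (64974733/500000000)) (hy := (129949467/1000000000)) (T := (53910339/1000000000)) (Eb := (947517059/1000000000)); first [lia | rewrite ?HI; lra].
  - apply Kf_le with (hx := (142352509/1000000000)) (hy := (129949467/1000000000)) (hz := (120309829/1000000000)); first [lia | unfold Qq, Pp; lra].
Qed.

Lemma hstep c r X : 0 <= c -> 0 <= r -> 0 <= X -> 0 <= c + r * X.
Proof. intros. pose proof (Rmult_le_pos r X H0 H1). lra. Qed.

Lemma le_from_diff A B X : B - A = X -> 0 <= X -> A <= B.
Proof. intros. lra. Qed.

Lemma poly_asym s : 11/5 <= s ->
  s^11 * (s^2*(s^4-1) + 14/100) <= (s^3 - 3/10)*(s^6 + 785/1000 * s^3 + (785/1000)^2/2)*(s^4-1)^2.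
Proof.
  intro Hs. assert (Hr : 0 <= s - 11/5) by lra.
  replace s with (11/5 + (s - 11/5)) by ring. remember (s - 11/5) as r eqn:Heqr. clear Heqr.
  apply (le_from_diff _ _ ((32067593076143/305175781250) + r * ((978498185450467/61035156250) + r * ((8971169182191359/97656250000) + r * ((4805641762256101/19531250000) + r * ((6311371721753551/15625000000) + r * ((353695665890413/781250000) + r * ((228571542488863/625000000) + r * ((13690190567861/62500000) + r * ((9849553136007/100000000) + r * ((332526380779/10000000) + r * ((16649697277/2000000) + r * ((600884213/400000) + r * ((925067/5000) + r * ((6969/500) + r * ((97/200))))))))))))))))).
  - field.
  - repeat (apply hstep; [lra | exact Hr | ]). lra.
Qed.

Lemma exp_lb2 : forall t, 0 <= t -> 1 + t + t^2/2 <= exp t.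
Proof.
  intros t Ht. pose proof (exp_lb6 t Ht).
  assert (0 <= t^3) by (apply pow_le; lra).
  assert (0 <= t^4) by (apply pow_le; lra).
  assert (0 <= t^5) by (apply pow_le; lra).
  assert (0 <= t^6) by (apply pow_le; lra).
  lra.
Qed.

Lemma exp_part d s P : 11/5 <= s -> 314/100 <= P -> d <= - (P / (4 * s^3)) ->
  exp d <= s^6 / (s^6 + 785/1000 * s^3 + (785/1000)^2/2).
Proof.
  intros Hs HP Hd.
  assert (Hs3 : 0 < s^3) by (apply pow_lt; lra).
  set (t := P / (4 * s^3)).
  set (t0 := 785/1000 / s^3).
  assert (Ht0 : 0 <= t0) by (unfold t0; apply Rmult_le_pos; [lra| left; apply Rinv_0_lt_compat; lra]).
  assert (Htt : t0 <= t).
  { unfold t, t0.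
    replace (P / (4 * s^3)) with ((P/4) * / s^3) by (field; lra).
    unfold Rdiv. apply Rmult_le_compat_r. left; apply Rinv_0_lt_compat; lra. lra. }
  assert (H1 : 1 + t0 + t0^2/2 <= exp t).
  { pose proof (exp_lb2 t ltac:(lra)). assert (t0^2 <= t^2) by (apply pow_incr; lra). lra. }
  assert (H2 : exp d <= / exp t).
  { rewrite <- exp_Ropp. destruct (Rle_lt_or_eq_dec _ _ Hd) as [h|h].
    left; apply exp_increasing; unfold t; lra. right; rewrite h; unfold t; reflexivity. }
  assert (H3 : / exp t <= / (1 + t0 + t0^2/2)).
  { apply Rinv_le_contravar; [pose proof (pow_le t0 2); lra | exact H1]. }
  replace (s^6 / (s^6 + 785/1000 * s^3 + (785/1000)^2/2)) with (/ (1 + t0 + t0^2/2)).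
  lra.
  unfold t0. field. split; [|lra].
  assert (0 < s^6) by (apply pow_lt; lra). lra.
Qed.

Lemma sqrt_part s a c : 11/5 <= s -> 0 < a -> 0 < c -> a^2 = s^2 - 1 -> c^2 = s^2 + 1 ->
  a + c <= 2*s - 1/(4*s^3) /\ s^2 - 1/s^2 <= a*c /\ a*c <= s^2.
Proof.
  intros Hs Ha Hc Ha2 Hc2.
  assert (Hac2 : (a*c)^2 = s^4 - 1) by (rewrite Rpow_mult_distr, Ha2, Hc2; ring).
  assert (Hac : 0 < a*c) by nra.
  set (i := / s^2).
  assert (Hs2 : 0 < s^2) by nra.
  assert (Hi : s^2 * i = 1) by (unfold i; field; lra).
  assert (Hi0 : 0 < i) by (unfold i; apply Rinv_0_lt_compat; lra).
  assert (Hi1 : i <= 1/4) by nra.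
  assert (Hup : a*c <= s^2 - i/2).
  { assert ((s^2 - i/2)^2 = s^4 - 1 + i^2/4).
    { replace (s^4) with (s^2*s^2) by ring. nra. }
    assert (0 < s^2 - i/2) by nra. nra. }
  assert (Hlo : s^2 - i <= a*c).
  { assert ((s^2 - i)^2 = s^4 - 2 + i^2).
    { replace (s^4) with (s^2*s^2) by ring. nra. }
    assert (i^2 <= 1) by nra. nra. }
  assert (Hs0 : 0 < s) by lra.
  split; [|split].
  - (* (a+c)^2 = 2 s^2 + 2ac <= 4 s^2 - i ; d = 2s - 1/(4 s^3) *)
    set (d := 2*s - 1/(4*s^3)).
    assert (Hd : d = 2*s - i/(4*s)) by (unfold d, i; field; lra).
    assert (Hd2 : d^2 = 4*s^2 - i + i^2/(16*s^2)).
    { rewrite Hd. unfold i. field. lra. }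
    assert (0 <= i^2/(16*s^2)) by (apply Rmult_le_pos; [apply pow_le; lra | left; apply Rinv_0_lt_compat; lra]).
    assert (Hsum2 : (a+c)^2 <= d^2) by nra.
    assert (0 < d).
    { rewrite Hd. assert (i/(4*s) <= 1) by (apply (Rmult_le_reg_r (4*s)); [lra|]; field_simplify; nra).
      lra. }
    nra.
  - unfold i in Hlo. unfold Rdiv. lra.
  - nra.
Qed.

Lemma u_part P s a c : 11/5 <= s -> 314/100 <= P -> 0 < a -> 0 < c -> a^2 = s^2 - 1 -> c^2 = s^2 + 1 ->
  (1 - /(P*a)) * (1 - /(P*c)) <= (1 - /(P*s))^2 * (1 + (14/100) / (s^2 * (s^4 - 1))).
Proof.
  intros Hs HP Ha Hc Ha2 Hc2.
  destruct (sqrt_part s a c Hs Ha Hc Ha2 Hc2) as [_ [Hlo Hup]].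
  assert (Hs0 : 0 < s) by lra.
  set (ux := /(P*a)). set (uz := /(P*c)). set (uy := /(P*s)).
  assert (Hux : ux * (P*a) = 1) by (unfold ux; field; lra).
  assert (Huz : uz * (P*c) = 1) by (unfold uz; field; lra).
  assert (Huy : uy * (P*s) = 1) by (unfold uy; field; lra).
  assert (0 < ux) by (unfold ux; apply Rinv_0_lt_compat; nra).
  assert (0 < uz) by (unfold uz; apply Rinv_0_lt_compat; nra).
  assert (0 < uy) by (unfold uy; apply Rinv_0_lt_compat; nra).
  assert (Hxz : ux * uz * (P^2 * (a*c)) = 1) by (unfold ux, uz; field; lra).
  assert (Hyy : uy^2 * (P^2 * s^2) = 1) by (unfold uy; field; lra).
  assert (Hyy' : uy^2 = / (P^2 * s^2)) by (unfold uy; field; lra).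
  clearbody ux uz uy.
  assert (Huy1 : uy <= 1448/10000).
  { assert (1 <= 1448/10000 * (P*s)) by nra. nra. }
  assert (Hsum : 2 * uy <= ux + uz).
  { (* (ux+uz)^2 >= 4 ux uz >= 4 uy^2 *)
    assert (Hxz2 : uy^2 <= ux*uz).
    { assert (0 < P^2) by nra.
      assert (P^2 * (a*c) <= P^2 * s^2) by (apply Rmult_le_compat_l; lra).
      assert (0 < P^2 * (a*c)) by (apply Rmult_lt_0_compat; [apply pow_lt; lra | apply Rmult_lt_0_compat; lra]).
      assert (Hxz3 : ux * uz = / (P^2 * (a*c))) by (apply (Rmult_eq_reg_r (P^2 * (a*c))); [rewrite Hxz, Rinv_l; lra | lra]).
      rewrite Hyy', Hxz3. apply Rinv_le_contravar; lra. }
    assert (4*uy^2 <= (ux+uz)^2) by (pose proof (pow2_ge_0 (ux - uz)); nra). assert (0 <= ux + uz) by lra. nra. }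
  assert (Hs4 : 0 < s^4 - 1) by nra.
  assert (HP2 : 0 < P^2) by (apply pow_lt; lra).
  assert (Hac0 : 0 < a*c) by (apply Rmult_lt_0_compat; lra).
  assert (Hxz3 : ux * uz = / (P^2 * (a*c))).
  { apply (Rmult_eq_reg_r (P^2 * (a*c))). rewrite Hxz, Rinv_l. reflexivity.
    apply Rgt_not_eq, Rmult_lt_0_compat; lra. apply Rgt_not_eq, Rmult_lt_0_compat; lra. }
  assert (HL : 0 < (s^4-1)/s^2) by (apply Rdiv_lt_0_compat; nra).
  assert (Hac_lo : (s^4 - 1) / s^2 <= a*c) by (replace ((s^4-1)/s^2) with (s^2 - 1/s^2) by (field; lra); lra).
  assert (Hi1 : / (P^2 * (a*c)) <= / (P^2 * ((s^4-1)/s^2))).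
  { apply Rinv_le_contravar. apply Rmult_lt_0_compat; lra. apply Rmult_le_compat_l; lra. }
  assert (Hid : / (P^2 * ((s^4-1)/s^2)) - / (P^2 * s^2) = / (P^2 * (s^2 * (s^4 - 1)))).
  { field. repeat split; lra. }
  assert (Hdiff : ux*uz - uy^2 <= /(P^2 * (s^2 * (s^4 - 1)))) by lra.
  assert (Hb : (1 - ux)*(1 - uz) <= (1 - uy)^2 + /(P^2 * (s^2 * (s^4 - 1)))) by nra.
  assert (Hq : 0 < s^2 * (s^4 - 1)) by nra.
  set (W := / (s^2 * (s^4 - 1))).
  assert (HW : 0 < W) by (unfold W; apply Rinv_0_lt_compat; lra).
  replace (/(P^2 * (s^2 * (s^4 - 1)))) with (/P^2 * W) in Hb by (unfold W; field; lra).
  replace ((14/100) / (s^2 * (s^4 - 1))) with (14/100 * W) by (unfold W; field; lra).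
  assert (HiP : / P^2 <= 1015/10000).
  { assert (98596/10000 <= P^2) by (simpl; nra). apply (Rmult_le_reg_r (P^2)); auto. rewrite Rinv_l by lra. lra. }
  assert (Hy2 : 7313/10000 <= (1 - uy)^2) by (simpl; nra).
  assert (/P^2 * W <= (1-uy)^2 * (14/100 * W)) by nra.
  nra.
Qed.

Lemma final_alg s : 11/5 <= s ->
  s^6 / (s^6 + 785/1000 * s^3 + (785/1000)^2/2) * (s^4/(s^4-1)) * (1 + (14/100) / (s^2 * (s^4 - 1)))
  <= 1 - (3/10) / s^3.
Proof.
  intro Hs. pose proof (poly_asym s Hs) as Hp.
  assert (Hs3 : 0 < s^3) by (apply pow_lt; lra).
  assert (Hs6 : 0 < s^6) by (apply pow_lt; lra).
  assert (Hs4 : 0 < s^4 - 1) by (assert (s^4 = (s^2)^2) by ring; nra).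
  set (Dn := s^3 * (s^6 + 785/1000 * s^3 + (785/1000)^2/2) * (s^4-1)^2).
  assert (HD : 0 < Dn).
  { unfold Dn. apply Rmult_lt_0_compat. apply Rmult_lt_0_compat; lra. apply pow_lt; lra. }
  assert (Heq : 1 - (3/10) / s^3 - s^6 / (s^6 + 785/1000 * s^3 + (785/1000)^2/2) * (s^4/(s^4-1)) * (1 + (14/100) / (s^2 * (s^4 - 1)))
    = ((s^3 - 3/10)*(s^6 + 785/1000 * s^3 + (785/1000)^2/2)*(s^4-1)^2 - s^11 * (s^2*(s^4-1) + 14/100)) / Dn).
  { unfold Dn. field. repeat split; try lra. }
  assert (0 <= ((s^3 - 3/10)*(s^6 + 785/1000 * s^3 + (785/1000)^2/2)*(s^4-1)^2 - s^11 * (s^2*(s^4-1) + 14/100)) / Dn).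
  { unfold Rdiv. apply Rmult_le_pos. lra. left; apply Rinv_0_lt_compat; lra. }
  lra.
Qed.

Lemma sqrt_facts m : (5 <= m)%nat ->
  11/5 <= sqrt (INR m) /\ 0 < sqrt (INR m - 1) /\ 0 < sqrt (INR m + 1) /\ sqrt (INR m)^2 = INR m /\
  sqrt (INR m - 1)^2 = sqrt (INR m)^2 - 1 /\ sqrt (INR m + 1)^2 = sqrt (INR m)^2 + 1 /\ 2 <= sqrt (INR m - 1).
Proof.
  intros H. set (s := sqrt (INR m)). set (a := sqrt (INR m - 1)). set (c := sqrt (INR m + 1)). apply le_INR in H. simpl in H.
  assert (Hs2 : s^2 = INR m) by (apply pow2_sqrt; lra).
  assert (Ha2 : a^2 = INR m - 1) by (apply pow2_sqrt; lra).
  assert (Hc2 : c^2 = INR m + 1) by (apply pow2_sqrt; lra).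
  assert (0 <= s) by apply sqrt_pos.
  assert (0 <= a) by apply sqrt_pos.
  assert (0 <= c) by apply sqrt_pos.
  repeat split; try nra.
Qed.

Lemma f_asym m : (5 <= m)%nat -> Defs.f m <= 1 - (3/10) / sqrt (INR m) ^ 3.
Proof.
  intro Hm. assert (Hm2 : (2 <= m)%nat) by lia.
  destruct (sqrt_facts m Hm) as [Hs [Ha [Hc [Hs2 [Ha2 [Hc2 Ha2']]]]]].
  pose proof PI_bounds as HPI.
  assert (HP : 314/100 <= PI) by lra.
  rewrite f_eq by auto. rewrite AA_eq by auto.
  destruct (u_range m Hm2) as [H1 [H2 H3]].
  assert (HPx : 0 < Pp (ux m) <= 1 - ux m) by (pose proof (pow_lt (ux m) 6 ltac:(lra)); destruct (PQ_pos _ H1); unfold Pp in *; lra).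
  assert (HPz : 0 < Pp (uz m) <= 1 - uz m) by (pose proof (pow_lt (uz m) 6 ltac:(lra)); destruct (PQ_pos _ H3); unfold Pp in *; lra).
  assert (HQy : 1 - uy m <= Qq (uy m)) by (unfold Qq; pose proof (pow_lt (uy m) 6 ltac:(lra)); lra).
  unfold dl, ux, uy, uz, xm, ym, zm in *.
  assert (HA' : INR m ^ 2 / ((INR m - 1) * (INR m + 1)) = sqrt (INR m)^4 / (sqrt (INR m)^4 - 1)).
  { replace (sqrt (INR m)^4) with ((sqrt (INR m)^2)^2) by ring. rewrite Hs2. apply le_INR in Hm. simpl in Hm. field. split; try lra. nra. }
  rewrite HA'.
  set (s := sqrt (INR m)) in *. set (a := sqrt (INR m - 1)) in *. set (c := sqrt (INR m + 1)) in *.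
  clearbody s a c.
  destruct (sqrt_part s a c Hs Ha Hc Ha2 Hc2) as [Hsum _].
  assert (Hs3 : 0 < s^3) by (apply pow_lt; lra).
  assert (Hdl : PI * a - 2 * (PI * s) + PI * c <= - (PI / (4 * s^3))).
  { replace (- (PI / (4 * s^3))) with (PI * (- (1/(4*s^3)))) by (field; lra).
    replace (PI * a - 2 * (PI * s) + PI * c) with (PI * (a + c - 2*s)) by ring.
    apply Rmult_le_compat_l; lra. }
  pose proof (exp_part _ s PI Hs HP Hdl) as HE.
  pose proof (u_part PI s a c Hs HP Ha Hc Ha2 Hc2) as HU.
  pose proof (final_alg s Hs) as HF.
  set (dd := PI * a - 2 * (PI * s) + PI * c) in *.
  set (E0 := s^6 / (s^6 + 785/1000 * s^3 + (785/1000)^2/2)) in *.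
  set (A0 := s^4 / (s^4 - 1)) in *.
  set (B0 := 1 + (14/100) / (s^2 * (s^4 - 1))) in *.
  assert (HA0 : 0 < A0).
  { unfold A0. apply Rdiv_lt_0_compat. apply pow_lt; lra. assert (s^4 = (s^2)^2) by ring. nra. }
  set (X := / (PI * a)) in *. set (Y := / (PI * s)) in *. set (Z := / (PI * c)) in *.
  assert (HY : 0 < 1 - Y) by lra.
  pose proof (exp_pos dd).
  assert (Hstep : exp dd * A0 * Pp X * Pp Z / Qq Y ^ 2 <= E0 * A0 * ((1-X)*(1-Z) / (1-Y)^2)).
  { assert (Hpp : Pp X * Pp Z <= (1-X)*(1-Z)) by (apply Rmult_le_compat; lra).
    assert (HQ0 : 0 < Qq Y ^ 2) by (apply pow_lt; lra).
    assert (Hq : / Qq Y^2 <= / (1-Y)^2) by (apply Rinv_le_contravar; [apply pow_lt; lra | apply pow_incr; lra]).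
    assert (Hr : Pp X * Pp Z * / Qq Y^2 <= (1-X)*(1-Z) * / (1-Y)^2).
    { apply Rmult_le_compat; try lra. apply Rmult_le_pos; lra. left; apply Rinv_0_lt_compat; lra. }
    assert (He : exp dd * A0 <= E0 * A0) by (apply Rmult_le_compat_r; lra).
    replace (exp dd * A0 * Pp X * Pp Z / Qq Y ^ 2) with ((exp dd * A0) * (Pp X * Pp Z * / Qq Y ^ 2)) by (unfold Rdiv; ring).
    unfold Rdiv. apply Rmult_le_compat; try lra. apply Rmult_le_pos; lra.
    apply Rmult_le_pos. apply Rmult_le_pos; lra. left; apply Rinv_0_lt_compat; lra. }
  assert (HB : (1-X)*(1-Z) / (1-Y)^2 <= B0).
  { apply (Rmult_le_reg_r ((1-Y)^2)). apply pow_lt; lra.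
    unfold Rdiv. rewrite Rmult_assoc, Rinv_l, Rmult_1_r. lra. apply pow_nonzero; lra. }
  assert (0 <= (1-X)*(1-Z) / (1-Y)^2).
  { unfold Rdiv. apply Rmult_le_pos. apply Rmult_le_pos; lra. left; apply Rinv_0_lt_compat, pow_lt; lra. }
  assert (E0 * A0 * ((1-X)*(1-Z) / (1-Y)^2) <= E0 * A0 * B0).
  { apply Rmult_le_compat_l; [|exact HB]. apply Rmult_le_pos; [|lra]. unfold E0. apply Rdiv_le_0_compat || idtac.
    unfold Rdiv. apply Rmult_le_pos. apply pow_le; lra. left; apply Rinv_0_lt_compat.
    assert (0 < s^6) by (apply pow_lt; lra). lra. }
  lra.
Qed.

Lemma Kf_asym m : (5 <= m)%nat -> Kf m <= 1 + (101/10000) / (INR m - 1)^3.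
Proof.
  intro Hm. assert (Hm2 : (2 <= m)%nat) by lia.
  destruct (sqrt_facts m Hm) as [Hs [Ha [Hc [Hs2 [Ha2 [Hc2 Ha2']]]]]].
  pose proof PI_bounds as HPI.
  destruct (u_range m Hm2) as [H1 [H2 H3]].
  rewrite Kf_split by auto.
  assert (HM : 5 <= INR m) by (apply le_INR in Hm; simpl in Hm; lra).
  assert (Hux : ux m * (PI * sqrt (INR m - 1)) = 1) by (unfold ux, xm; field; split; lra).
  assert (Huy : uy m * (PI * sqrt (INR m)) = 1) by (unfold uy, ym; field; split; lra).
  assert (Huz : uz m * (PI * sqrt (INR m + 1)) = 1) by (unfold uz, zm; field; split; lra).
  set (s := sqrt (INR m)) in *. set (a := sqrt (INR m - 1)) in *. set (c := sqrt (INR m + 1)) in *.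
  clearbody s a c.
  set (X := ux m) in *. set (Y := uy m) in *. set (Z := uz m) in *. clearbody X Y Z.
  assert (Has : a <= s) by (assert (0 < a + s) by lra; nra).
  assert (Hsc : s <= c) by (assert (0 < c + s) by lra; nra).
  assert (HPa : 0 < PI * a) by nra.
  assert (HYX : Y <= X).
  { assert (PI * a <= PI * s) by (apply Rmult_le_compat_l; lra). nra. }
  assert (HZX : Z <= X).
  { assert (PI * a <= PI * c) by (apply Rmult_le_compat_l; lra). nra. }
  assert (HX16 : X <= 16/100).
  { assert (628/100 <= PI * a) by nra. nra. }
  assert (HrY : Qq Y / Pp Y <= Qq X / Pp X) by (apply ratio_mono; lra).
  assert (HrZ : Qq Z / Pp Z <= Qq X / Pp X) by (apply ratio_mono; lra).
  pose proof (ratio_ge1 Y H2). pose proof (ratio_ge1 Z H3). pose proof (ratio_ge1 X H1).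
  set (e := / (INR m - 1)).
  assert (He : e * (INR m - 1) = 1) by (unfold e; field; lra).
  assert (He0 : 0 < e) by (unfold e; apply Rinv_0_lt_compat; lra).
  assert (He4 : e <= 1/4) by nra.
  replace ((101/10000) / (INR m - 1)^3) with (101/10000 * e^3) by (unfold e; field; lra).
  assert (HX2 : X^2 * PI^2 = e).
  { apply (Rmult_eq_reg_r (INR m - 1)); [|lra]. rewrite He. replace (INR m - 1) with (a^2) by (rewrite Ha2, Hs2; ring).
    replace (X^2 * PI^2 * a^2) with ((X * (PI * a))^2) by ring. rewrite Hux. ring. }
  assert (HP2 : 98596/10000 <= PI^2) by (simpl; nra).
  assert (HX2' : X^2 <= 101425/1000000 * e).
  { assert (X^2 * (98596/10000) <= e) by (rewrite <- HX2; apply Rmult_le_compat_l; [apply pow2_ge_0| lra]). lra. }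
  assert (HX6 : X^6 <= (101425/1000000)^3 * e^3).
  { replace (X^6) with ((X^2)^3) by ring. replace ((101425/1000000)^3 * e^3) with ((101425/1000000 * e)^3) by ring.
    apply pow_incr. split; [apply pow2_ge_0 | lra]. }
  assert (HPX : 8399/10000 <= Pp X).
  { unfold Pp. assert (X^6 <= (16/100)^6) by (apply pow_incr; lra). lra. }
  set (q := Qq X / Pp X - 1).
  assert (Hq : q = 2 * X^6 / Pp X) by (unfold q, Qq, Pp in *; field; lra).
  assert (Hq0 : 0 <= q) by (unfold q; lra).
  assert (Hq1 : q <= 25/10000 * e^3).
  { rewrite Hq. apply (Rmult_le_reg_r (Pp X)); [lra|].
    unfold Rdiv. rewrite Rmult_assoc, Rinv_l, Rmult_1_r by lra.
    assert (0 <= e^3) by (apply pow_le; lra).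
    assert (25/10000 * e^3 * (8399/10000) <= 25/10000 * e^3 * Pp X) by (apply Rmult_le_compat_l; lra).
    lra. }
  assert (He3 : e^3 <= 1/64) by (replace (1/64) with ((1/4)^3) by field; apply pow_incr; lra).
  replace (Qq X / Pp X) with (1 + q) in * by (unfold q; ring).
  assert (Hprod : (1 + q) * (Qq Z / Pp Z) * (Qq Y / Pp Y)^2 <= (1+q) * (1+q) * (1+q)^2).
  { apply Rmult_le_compat. apply Rmult_le_pos; lra. apply pow_le; lra.
    apply Rmult_le_compat; lra. apply pow_incr; lra. }
  eapply Rle_trans; [exact Hprod|].
  assert (Hq2 : q <= 1/10000) by lra.
  assert (q * (6*q + 4*q^2 + q^3) <= q * (1/1000)).
  { apply Rmult_le_compat_l; [lra|]. assert (q^2 <= q) by (simpl; nra). assert (q^3 <= q) by (simpl; nra). lra. }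
  replace ((1+q)*(1+q)*(1+q)^2) with (1 + 4*q + q * (6*q + 4*q^2 + q^3)) by ring.
  lra.
Qed.

Lemma s2_form n : (3 <= n)%nat ->
  s2 n = Defs.f (n-1) * Kf (n-1) + Defs.f (n+1) * Kf (n+1) - Defs.f (n-1) * Defs.f (n+1).
Proof.
  intro H. unfold s2. rewrite !g_eq by lia. reflexivity.
Qed.

Lemma asym_case n : (6 <= n)%nat -> s2 n < 1.
Proof.
  intro Hn. rewrite s2_form by lia.
  assert (H1 : (5 <= n - 1)%nat) by lia. assert (H2 : (5 <= n + 1)%nat) by lia.
  pose proof (f_asym _ H1) as Hf1. pose proof (f_asym _ H2) as Hf2.
  pose proof (Kf_asym _ H1) as Hk1. pose proof (Kf_asym _ H2) as Hk2.
  pose proof (f_pos (n-1) ltac:(lia)). pose proof (f_pos (n+1) ltac:(lia)).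
  pose proof (Kf_ge1 (n-1) ltac:(lia)). pose proof (Kf_ge1 (n+1) ltac:(lia)).
  rewrite minus_INR in * by lia. rewrite plus_INR in *. simpl INR in *.
  assert (HN : 6 <= INR n) by (apply le_INR in Hn; simpl in Hn; lra).
  set (N := INR n) in *.
  destruct (sqrt_facts _ H1) as [Hs1 _]. destruct (sqrt_facts _ H2) as [Hs2 _].
  rewrite minus_INR in * by lia. rewrite plus_INR in *. simpl INR in *. fold N in Hs1, Hs2.
  assert (Hq1 : (sqrt (N - 1))^2 = N - 1) by (apply pow2_sqrt; lra).
  assert (Hq2 : (sqrt (N + 1))^2 = N + 1) by (apply pow2_sqrt; lra).
  set (s1 := sqrt (N - 1)) in *. set (s2 := sqrt (N + 1)) in *. clearbody s1 s2.
  set (F1 := 1 - 3/10 / s1^3). set (F2 := 1 - 3/10 / s2^3).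
  set (K1 := 1 + 101/10000 / (N - 1 - 1)^3). set (K2 := 1 + 101/10000 / (N + 1 - 1)^3).
  assert (Hs13 : 0 < s1^3) by (apply pow_lt; lra).
  assert (Hs23 : 0 < s2^3) by (apply pow_lt; lra).
  assert (HF1 : 0 <= 3/10 / s1^3) by (unfold Rdiv; apply Rmult_le_pos; [lra | left; apply Rinv_0_lt_compat; lra]).
  assert (HF2 : 0 <= 3/10 / s2^3) by (unfold Rdiv; apply Rmult_le_pos; [lra | left; apply Rinv_0_lt_compat; lra]).
  assert (HA : 0 < N - 2) by lra.
  assert (HK1 : 0 <= 101/10000 / (N - 1 - 1)^3) by (unfold Rdiv; apply Rmult_le_pos; [lra | left; apply Rinv_0_lt_compat, pow_lt; lra]).
  assert (HK2 : 0 <= 101/10000 / (N + 1 - 1)^3) by (unfold Rdiv; apply Rmult_le_pos; [lra | left; apply Rinv_0_lt_compat, pow_lt; lra]).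
  apply (combine _ _ _ _ F1 F2 K1 K2); try (unfold F1, F2, K1, K2; lra).
  unfold F1, F2, K1, K2.
  assert (Hss : (s1*s2)^2 <= N^2) by (rewrite Rpow_mult_distr, Hq1, Hq2; nra).
  assert (Hss' : s1*s2 <= N) by (assert (0 < s1*s2) by nra; nra).
  assert (Hp3 : (s1*s2)^3 <= N^3) by (apply pow_incr; split; nra).
  assert (HN3 : 0 < N^3) by (apply pow_lt; lra).
  assert (HL : 9/100 / N^3 <= (3/10 / s1^3) * (3/10 / s2^3)).
  { replace ((3/10 / s1^3) * (3/10 / s2^3)) with (9/100 / (s1*s2)^3) by (field; lra).
    unfold Rdiv. apply Rmult_le_compat_l. lra. apply Rinv_le_contravar. apply pow_lt; nra. auto. }
  assert (HR1 : (1 - 3/10/s1^3) * (101/10000 / (N-1-1)^3) <= 101/10000 / (N-1-1)^3).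
  { assert (1 - 3/10/s1^3 <= 1) by lra. nra. }
  assert (HR2 : (1 - 3/10/s2^3) * (101/10000 / (N+1-1)^3) <= 101/10000 / (N+1-1)^3).
  { assert (1 - 3/10/s2^3 <= 1) by lra. nra. }
  replace (1 - (1 - 3/10/s1^3)) with (3/10/s1^3) by ring.
  replace (1 - (1 - 3/10/s2^3)) with (3/10/s2^3) by ring.
  replace (1 + 101/10000 / (N-1-1)^3 - 1) with (101/10000 / (N-1-1)^3) by ring.
  replace (1 + 101/10000 / (N+1-1)^3 - 1) with (101/10000 / (N+1-1)^3) by ring.
  replace (N+1-1) with N by ring. replace (N-1-1) with (N-2) in * by ring.
  replace (N+1-1) with N in HR2 by ring.
  (* 101/10000/(N-2)^3 + 101/10000/N^3 < 9/100/N^3 *)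
  assert (HNN : N^3 <= (3/2)^3 * (N-2)^3).
  { replace ((3/2)^3 * (N-2)^3) with ((3/2*(N-2))^3) by ring. apply pow_incr. lra. }
  assert (HD3 : 0 < (N-2)^3) by (apply pow_lt; lra).
  assert (101/10000/(N-2)^3 < 799/10000/N^3).
  { apply (Rmult_lt_reg_r (N^3 * (N-2)^3)). apply Rmult_lt_0_compat; lra.
    replace (101/10000/(N-2)^3 * (N^3 * (N-2)^3)) with (101/10000 * N^3) by (field; lra).
    replace (799/10000/N^3 * (N^3 * (N-2)^3)) with (799/10000 * (N-2)^3) by (field; lra).
    lra. }
  assert (9/100 / N^3 = 799/10000/N^3 + 101/10000/N^3) by (field; lra).
  lra.
Qed.

Lemma small_case n F1 K1 F2 K2 : (3 <= n)%nat ->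
  Defs.f (n-1) <= F1 /\ Kf (n-1) <= K1 -> Defs.f (n+1) <= F2 /\ Kf (n+1) <= K2 ->
  F1 <= 1 -> F2 <= 1 ->
  F1 * (K1 - 1) + F2 * (K2 - 1) < (1 - F1) * (1 - F2) -> s2 n < 1.
Proof.
  intros Hn [Hf1 Hk1] [Hf2 Hk2] HF1 HF2 Hnum. rewrite s2_form by auto.
  pose proof (f_pos (n-1) ltac:(lia)). pose proof (f_pos (n+1) ltac:(lia)).
  pose proof (Kf_ge1 (n-1) ltac:(lia)). pose proof (Kf_ge1 (n+1) ltac:(lia)).
  apply (combine _ _ _ _ F1 F2 K1 K2); lra.
Qed.

Theorem theorem2p5 : forall n : nat, (3 <= n)%nat -> s2 n < 1.
Proof.
  intros n Hn.
  assert (n = 3%nat \/ n = 4%nat \/ n = 5%nat \/ (6 <= n)%nat) as [->|[->|[->|H]]] by lia.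
  - apply (small_case 3 _ _ _ _ ltac:(lia) fK_2 fK_4); lra.
  - apply (small_case 4 _ _ _ _ ltac:(lia) fK_3 fK_5); lra.
  - apply (small_case 5 _ _ _ _ ltac:(lia) fK_4 fK_6); lra.
  - apply asym_case; auto.
Qed.
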